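(* For all even $n\ge2$ and even $q\ge2$, $$A_{BMU}(n,q)\le\frac{\binom{n}{n/2}\left(\frac q2\right)^n}{n}.$$ In particular (as $\binom{n}{n/2}\approx 2^{n+1}/\sqrt{2\pi n}$), the redundancy of balanced MU codes is at least $1.5\log_q n+O(1)$.
   Context: $\Sigma_q=\{0,\dots,q-1\}$ with $q$ even, $n$ even. A word $\vec a\in\Sigma_q^n$ is balanced if the number of positions $i$ with $a_i\in[0,q/2-1]$ equals $n/2$ (for $q=2$: Hamming weight $n/2$). A code $\mathcal C\subseteq\Sigma_q^n$ is mutually uncorrelated (MU) if for any two not necessarily distinct codewords $\vec a,\vec b$, no proper nonempty prefix of $\vec a$ equals a suffix of $\vec b$ of the same length. A balanced MU code is an MU code all of whose codewords are balanced; $A_{BMU}(n,q)$ is the largest size of a balanced MU code in $\Sigma_q^n$. Redundancy of $A\subseteq\Sigma_q^n$ is $n-\log_q|A|$. *)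

(* Defs.v *)
From mathcomp Require Import all_boot.
Set Implicit Arguments. Unset Strict Implicit. Unset Printing Implicit Defensive.

Definition word (n q : nat) := (n.-tuple 'I_q)%type.

Definition balanced (n q : nat) (a : word n q) : bool :=
  count (fun x : 'I_q => (x : nat) < q %/ 2) a == n %/ 2.

Definition mutually_uncorrelated (n q : nat) (C : {set word n q}) : bool :=
  [forall a in C, forall b in C, forall k : 'I_n,
     (0 < k) ==> (take k (val a) != drop (n - k) (val b))].

Definition balanced_MU (n q : nat) (C : {set word n q}) : bool :=
  mutually_uncorrelated C && [forall a in C, balanced a].

Definition A_BMU (n q : nat) : nat :=
  \max_(C : {set word n q} | balanced_MU C) #|C|.

(* Main.v *)
Require Import Defs.
From mathcomp Require Import all_boot.
From mathcomp Require Import zify.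

Lemma arith_aux d x y : 0 < d -> x < d * 2 -> y < d * 2 ->
  (x < d) = (y < d) -> x %% d = y %% d -> x = y.
Proof.
move=> d0 hx hy hlt hm.
have key : forall z, z < d * 2 -> d <= z -> z %% d = z - d.
  move=> z hz hdz; have -> : z = (z - d) + d by lia.
  by rewrite modnDr modn_small; lia.
case: (ltnP x d) hlt => hxd hlt.
  by move: hm; rewrite modn_small // modn_small //; rewrite -hlt.
have hyd : d <= y by rewrite leqNgt -hlt.
move: hm; rewrite key // key //; lia.
Qed.

Lemma count_card n (T : finType) (t : n.-tuple T) (p : pred T) :
  count p t = #|[set i : 'I_n | p (tnth t i)]|.
Proof.
rewrite -[in LHS](map_tnth_enum t) count_map cardsE cardE.
rewrite -size_filter /enum_mem -enumT /=.
by rewrite filter_predT.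
Qed.

Lemma rot_MU n q (C : {set word n q}) : mutually_uncorrelated C ->
  forall a b : word n q, a \in C -> b \in C -> forall i j : 'I_n,
  rot i (val a) = rot j (val b) -> a = b /\ i = j.
Proof.
move=> HC a b ha hb i j.
wlog hij : a b ha hb i j / i <= j.
  move=> W; case: (leqP i j) => h; first exact: W.
  move=> e; have [-> ->] : b = a /\ j = i.
    by apply: W => //; exact: ltnW.
  by [].
have sb : size (val b) = n by rewrite size_tuple.
have sa : size (val a) = n by rewrite size_tuple.
have hjn : j < n := ltn_ord j.
have -> : (j : nat) = i + (j - i) by lia.
rewrite rotD ?sb; last by lia.
move/rot_inj => ea.
case hd : (j - i) => [|d].
  rewrite hd rot0 in ea; split; first exact: val_inj.
  by apply: val_inj => /=; lia.
exfalso; rewrite hd in ea.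
have hdn : d.+1 < n by lia.
move: HC => /forallP /(_ b) /implyP /(_ hb) /forallP /(_ a) /implyP /(_ ha)
  /forallP /(_ (Ordinal hdn)) /implyP /(_ isT) /=.
rewrite ea /rot drop_size_cat ?eqxx //.
by rewrite size_drop sb.
Qed.

Definition hmap n q m (t : word n q) : {set 'I_n} * {ffun 'I_n -> 'I_m.+1} :=
  ([set i | (tnth t i : nat) < q %/ 2],
   [ffun i => inord ((tnth t i : nat) %% m.+1)]).

Lemma hmap_inj n q m : q = m.+1 * 2 -> injective (hmap n q m).
Proof.
move=> hq t1 t2 [e1 e2].
have hd : q %/ 2 = m.+1 by rewrite hq mulnK.
apply: eq_from_tnth => k; apply: val_inj => /=.
apply: (@arith_aux m.+1) => //.
- by rewrite -hq.
- by rewrite -hq.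
- have := congr1 (fun S : {set 'I_n} => k \in S) e1; rewrite !inE hd; exact.
- have := congr1 (fun f : {ffun 'I_n -> 'I_m.+1} => (f k : nat)) e2; rewrite !ffunE /=.
  by rewrite !inordK ?ltn_pmod.
Qed.

Lemma code_bound n q m (C : {set word n q}) : q = m.+1 * 2 ->
  balanced_MU C -> n * #|C| <= 'C(n, n %/ 2) * (m.+1) ^ n.
Proof.
move=> hq /andP [HC HB].
pose F := fun p : word n q * 'I_n => @hmap n q m (rot_tuple p.2 p.1).
have injF : {in setX C [set: 'I_n] &, injective F}.
  move=> [a i] [b j] /setXP [ha _] /setXP [hb _] /(@hmap_inj n q m hq) e.
  have := congr1 val e => /= /(@rot_MU n q C HC a b ha hb) [-> ->] //.
have hcard : #|setX C [set: 'I_n]| = #|C| * n by rewrite cardsX cardsT card_ord.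
rewrite mulnC -hcard -(card_in_imset injF).
pose D := setX [set S : {set 'I_n} | #|S| == n %/ 2] [set: {ffun 'I_n -> 'I_m.+1}].
have -> : 'C(n, n %/ 2) * m.+1 ^ n = #|D|.
  by rewrite cardsX card_draws cardsT card_ffun !card_ord.
apply: subset_leq_card; apply/subsetP => y /imsetP [[a i]] /setXP [ha _] ->.
rewrite /F /hmap inE /= !inE andbT.
rewrite -(@count_card n _ (rot_tuple i a) (fun x : 'I_q => x < q %/ 2)) /=.
have -> : count (fun x : 'I_q => x < q %/ 2) (rot i a) =
          count (fun x : 'I_q => x < q %/ 2) a.
  by apply/permP; rewrite perm_rot.
by move: HB => /forallP /(_ a) /implyP /(_ ha).
Qed.

Theorem theorem7 (n q : nat) (hn2 : 2 <= n) (hne : ~~ odd n)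
    (hq2 : 2 <= q) (hqe : ~~ odd q) :
  n * A_BMU n q <= 'C(n, n %/ 2) * (q %/ 2) ^ n.
Proof.
have hq : q = (q %/ 2).-1.+1 * 2.
  rewrite prednK; first by rewrite divnK // dvdn2.
  by rewrite divn_gt0.
rewrite /A_BMU.
apply: (big_ind (fun x => n * x <= 'C(n, n %/ 2) * (q %/ 2) ^ n)).
- by rewrite muln0.
- by move=> x y hx hy; rewrite maxnMr geq_max hx hy.
- move=> C hC; have := @code_bound n q _ C hq hC.
  by rewrite prednK // divn_gt0.
Qed.
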